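(* Let $(U,\tau_R,\rho)$ be a general ordered topological approximation space and $A\subseteq U$. If $A$ is $R$-increasing exact, i.e. $\underline{R}_{Inc}(A)=\overline{R}^{Inc}(A)$, then $A$ is $\alpha$-increasing exact, i.e. $\underline{\alpha}_{Inc}(A)=\overline{\alpha}^{Inc}(A)$. Likewise, if $\underline{R}_{Dec}(A)=\overline{R}^{Dec}(A)$, then $\underline{\alpha}_{Dec}(A)=\overline{\alpha}^{Dec}(A)$.
   Context: A general ordered topological approximation space (GOTAS) is a triple $(U,\tau_R,\rho)$ where $U$ is a non-empty set, $R$ is a binary relation on $U$, $\tau_R$ is a topology on $U$ generated by $R$, and $\rho$ is a partial order on $U$. A subset $A\subseteq U$ is increasing (resp. decreasing) if whenever $a\in A$, $x\in U$ and $a\,\rho\,x$ (resp. $x\,\rho\,a$), then $x\in A$. For $A\subseteq U$: $\underline{R}_{Inc}(A)$ is the greatest subset of $A$ that is both $\tau_R$-open and increasing; $\underline{R}_{Dec}(A)$ is the greatest subset of $A$ that is $\tau_R$-open and decreasing; $\overline{R}^{Inc}(A)$ is the smallest superset of $A$ that is $\tau_R$-closed and increasing; $\overline{R}^{Dec}(A)$ is the smallest superset of $A$ that is $\tau_R$-closed and decreasing. Define $\underline{\alpha}_{Inc}(A)=A\cap\underline{R}_{Inc}(\overline{R}^{Inc}(\underline{R}_{Inc}(A)))$, $\overline{\alpha}^{Inc}(A)=A\cup\overline{R}^{Inc}(\underline{R}_{Inc}(\overline{R}^{Inc}(A)))$, $\underline{\alpha}_{Dec}(A)=A\cap\underline{R}_{Dec}(\overline{R}^{Dec}(\underline{R}_{Dec}(A)))$,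 $\overline{\alpha}^{Dec}(A)=A\cup\overline{R}^{Dec}(\underline{R}_{Dec}(\overline{R}^{Dec}(A)))$. *)

(* Defs.v *)
Set Implicit Arguments.

Section GOTAS.
Variable U : Type.

Definition subset (A B : U -> Prop) : Prop := forall x, A x -> B x.

Definition is_topology (T : (U -> Prop) -> Prop) : Prop :=
  T (fun _ => True) /\
  (forall F : (U -> Prop) -> Prop, (forall B, F B -> T B) ->
      T (fun x => exists B, F B /\ B x)) /\
  (forall A B, T A -> T B -> T (fun x => A x /\ B x)).

(* The topology tau_R generated by the relation R: the smallest topology
   having the after-sets xR = {y | R x y} as a subbase. *)
Definition tauR (R : U -> U -> Prop) (A : U -> Prop) : Prop :=
  forall T, is_topology T -> (forall x, T (fun y => R x y)) -> T A.

Definition R_open (R : U -> U -> Prop) (A : U -> Prop) : Prop := tauR R A.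
Definition R_closed (R : U -> U -> Prop) (A : U -> Prop) : Prop :=
  tauR R (fun x => ~ A x).

Definition partial_order (rho : U -> U -> Prop) : Prop :=
  (forall x, rho x x) /\
  (forall x y, rho x y -> rho y x -> x = y) /\
  (forall x y z, rho x y -> rho y z -> rho x z).

Definition increasing (rho : U -> U -> Prop) (A : U -> Prop) : Prop :=
  forall a x, A a -> rho a x -> A x.
Definition decreasing (rho : U -> U -> Prop) (A : U -> Prop) : Prop :=
  forall a x, A a -> rho x a -> A x.

Definition lowR_Inc R rho (A : U -> Prop) : U -> Prop :=
  fun x => exists B, subset B A /\ R_open R B /\ increasing rho B /\ B x.
Definition lowR_Dec R rho (A : U -> Prop) : U -> Prop :=
  fun x => exists B, subset B A /\ R_open R B /\ decreasing rho B /\ B x.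
Definition uppR_Inc R rho (A : U -> Prop) : U -> Prop :=
  fun x => forall B, subset A B -> R_closed R B -> increasing rho B -> B x.
Definition uppR_Dec R rho (A : U -> Prop) : U -> Prop :=
  fun x => forall B, subset A B -> R_closed R B -> decreasing rho B -> B x.

Definition lowAlpha_Inc R rho (A : U -> Prop) : U -> Prop :=
  fun x => A x /\ lowR_Inc R rho (uppR_Inc R rho (lowR_Inc R rho A)) x.
Definition uppAlpha_Inc R rho (A : U -> Prop) : U -> Prop :=
  fun x => A x \/ uppR_Inc R rho (lowR_Inc R rho (uppR_Inc R rho A)) x.
Definition lowAlpha_Dec R rho (A : U -> Prop) : U -> Prop :=
  fun x => A x /\ lowR_Dec R rho (uppR_Dec R rho (lowR_Dec R rho A)) x.
Definition uppAlpha_Dec R rho (A : U -> Prop) : U -> Prop :=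
  fun x => A x \/ uppR_Dec R rho (lowR_Dec R rho (uppR_Dec R rho A)) x.

End GOTAS.

(* Main.v *)
Require Import Defs.
From Stdlib Require Import FunctionalExtensionality PropExtensionality.

Lemma pext (U : Type) (P Q : U -> Prop) : (forall x, P x <-> Q x) -> P = Q.
Proof. intro H; apply functional_extensionality; intro x; apply propositional_extensionality; apply H. Qed.

Theorem proposition3p4 (U : Type) (R rho : U -> U -> Prop)
  (Hrho : partial_order rho) (A : U -> Prop) :
  (lowR_Inc R rho A = uppR_Inc R rho A ->
     lowAlpha_Inc R rho A = uppAlpha_Inc R rho A) /\
  (lowR_Dec R rho A = uppR_Dec R rho A ->
     lowAlpha_Dec R rho A = uppAlpha_Dec R rho A).
Proof.
  split; intro E.
  - assert (HL : lowR_Inc R rho A = A).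
    { apply pext; intro x; split.
      - intros [B [HB [_ [_ Bx]]]]; auto.
      - intro Ax; rewrite E; intros B HB _ _; auto. }
    assert (HC : uppR_Inc R rho A = A) by (rewrite <- E; exact HL).
    unfold lowAlpha_Inc, uppAlpha_Inc.
    rewrite HL, HC, HL, HC.
    apply pext; intro x; tauto.
  - assert (HL : lowR_Dec R rho A = A).
    { apply pext; intro x; split.
      - intros [B [HB [_ [_ Bx]]]]; auto.
      - intro Ax; rewrite E; intros B HB _ _; auto. }
    assert (HC : uppR_Dec R rho A = A) by (rewrite <- E; exact HL).
    unfold lowAlpha_Dec, uppAlpha_Dec.
    rewrite HL, HC, HL, HC.
    apply pext; intro x; tauto.
Qed.
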